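(* Let $(X,d)$ be a metric space, let $k\ge1$, let $p_1,\dots,p_k\in X$, and define $$\mu_P(x,y)=\prod_{i=1}^k\big[d(x,y)+\sqrt{d(x,p_i)d(y,p_i)}\big],\qquad x,y\in X.$$ Then for all $x,y,z\in X$, $$\mu_P(x,y)\leq \Big(\frac{27}{2}\Big)^k\big(\mu_P(x,z)+\mu_P(z,y)\big).$$ Moreover, for all $x,y,z,w\in X$, $$\mu_P(x,y)\mu_P(z,w)\leq 4\Big(\frac{27}{2}\Big)^{2k}\max\{\mu_P(x,z)\mu_P(y,w),\ \mu_P(x,w)\mu_P(y,z)\}.$$ *)

(* Defs.v *)
From Stdlib Require Import Reals.
Open Scope R_scope.

Definition is_metric {X : Type} (d : X -> X -> R) : Prop :=
  (forall x y, 0 <= d x y) /\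
  (forall x y, d x y = 0 <-> x = y) /\
  (forall x y, d x y = d y x) /\
  (forall x y z, d x z <= d x y + d y z).

Fixpoint prod_1_to (k : nat) (f : nat -> R) : R :=
  match k with
  | O => 1
  | S k' => prod_1_to k' f * f (S k')
  end.

Definition muP {X : Type} (d : X -> X -> R) (k : nat) (p : nat -> X) (x y : X) : R :=
  prod_1_to k (fun i => d x y + sqrt (d x (p i) * d y (p i))).

(* Main.v *)
Require Import Defs.
From Stdlib Require Import Reals Lra Psatz.
Open Scope R_scope.

Lemma sq_up a b m : 0 <= a -> 0 <= b -> a <= m -> b <= m -> sqrt (a*b) <= m.
Proof. intros. rewrite <- (sqrt_square m) by lra. apply sqrt_le_1_alt. nra. Qed.

Lemma sq_lo a b m : 0 <= m -> m <= a -> m <= b -> m <= sqrt (a*b).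
Proof. intros. rewrite <- (sqrt_square m) by lra. apply sqrt_le_1_alt. nra. Qed.

Lemma sq_ge0 a b : 0 <= sqrt (a*b).
Proof. apply sqrt_pos. Qed.

Lemma prod_ge0 k f : (forall i, 0 <= f i) -> 0 <= prod_1_to k f.
Proof. intros H; induction k; simpl; [lra|]. apply Rmult_le_pos; auto. Qed.

Lemma prod_le k f g C : 0 <= C -> (forall i, 0 <= f i) -> (forall i, f i <= C * g i) ->
  prod_1_to k f <= C ^ k * prod_1_to k g.
Proof.
  intros HC H0 H; induction k; simpl; [lra|].
  replace (C * C ^ k * (prod_1_to k g * g (S k))) with
    ((C ^ k * prod_1_to k g) * (C * g (S k))) by ring.
  apply Rmult_le_compat; auto. apply prod_ge0; auto.
Qed.

Lemma prod_ext k f g : (forall i, f i = g i) -> prod_1_to k f = prod_1_to k g.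
Proof. intros H; induction k; simpl; auto. rewrite IHk, H; auto. Qed.

Section S.
Variable X : Type.
Variable d : X -> X -> R.
Hypothesis Hd : is_metric d.

Lemma muP_ge0 k p x y : 0 <= muP d k p x y.
Proof.
  destruct Hd as [H0 _]. apply prod_ge0. intro i.
  pose proof (H0 x y). pose proof (sq_ge0 (d x (p i)) (d y (p i))). lra.
Qed.

Lemma muP_sym k p x y : muP d k p x y = muP d k p y x.
Proof.
  destruct Hd as [_ [_ [Hs _]]]. unfold muP. apply prod_ext. intro i.
  rewrite Hs, Rmult_comm. auto.
Qed.

Lemma factor x y z q : d x z <= d z y ->
  d x y + sqrt (d x q * d y q) <= 9 * (d z y + sqrt (d z q * d y q)).
Proof.
  destruct Hd as [H0 [_ [Hs Ht]]]. intro Huv.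
  pose proof (Ht x z y). pose proof (Ht x z q). pose proof (Ht y z q).
  pose proof (Ht z y q). pose proof (Ht z q y). pose proof (Ht x q y).
  pose proof (Hs z y). pose proof (Hs q y). pose proof (Hs z q).
  pose proof (Hs x z). pose proof (Hs y z).
  pose proof (H0 x q). pose proof (H0 y q). pose proof (H0 z q).
  pose proof (H0 x y). pose proof (H0 z y). pose proof (H0 x z).
  destruct (Rle_dec (d y q) (d z q)).
  - pose proof (sq_lo (d z q) (d y q) (d y q) ltac:(lra) ltac:(lra) ltac:(lra)).
    destruct (Rle_dec (d x q) (d y q)).
    + pose proof (sq_up (d x q) (d y q) (d y q) ltac:(lra) ltac:(lra) ltac:(lra) ltac:(lra)). lra.
    + pose proof (sq_up (d x q) (d y q) (d x q) ltac:(lra) ltac:(lra) ltac:(lra) ltac:(lra)). lra.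
  - pose proof (sq_lo (d z q) (d y q) (d z q) ltac:(lra) ltac:(lra) ltac:(lra)).
    destruct (Rle_dec (d x q) (d y q)).
    + pose proof (sq_up (d x q) (d y q) (d y q) ltac:(lra) ltac:(lra) ltac:(lra) ltac:(lra)). lra.
    + pose proof (sq_up (d x q) (d y q) (d x q) ltac:(lra) ltac:(lra) ltac:(lra) ltac:(lra)). lra.
Qed.

Lemma key k p x y z : d x z <= d z y -> muP d k p x y <= 9 ^ k * muP d k p z y.
Proof.
  intro H. unfold muP. apply prod_le; [lra| |].
  - intro i. destruct Hd as [H0 _]. pose proof (H0 x y).
    pose proof (sq_ge0 (d x (p i)) (d y (p i))). lra.
  - intro i. apply factor; auto.
Qed.

Lemma key2 k p x y z : d z y <= d x z -> muP d k p x y <= 9 ^ k * muP d k p x z.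
Proof.
  destruct Hd as [_ [_ [Hs _]]]. intro H.
  rewrite muP_sym, (muP_sym k p x z). apply key. pose proof (Hs y z). pose proof (Hs z x). lra.
Qed.

End S.

Theorem lemma3p5 (X : Type) (d : X -> X -> R) (k : nat) (p : nat -> X) :
  is_metric d -> (1 <= k)%nat ->
  (forall x y z : X,
      muP d k p x y <= (27/2) ^ k * (muP d k p x z + muP d k p z y)) /\
  (forall x y z w : X,
      muP d k p x y * muP d k p z w <=
      4 * (27/2) ^ (2 * k) *
        Rmax (muP d k p x z * muP d k p y w) (muP d k p x w * muP d k p y z)).
Proof.
  intros Hd _.
  assert (H9 : 9 ^ k <= (27/2) ^ k) by (apply pow_incr; lra).
  assert (H9p : 0 <= 9 ^ k) by (apply pow_le; lra).
  assert (H81 : 9 ^ k * 9 ^ k <= 4 * (27/2) ^ (2 * k)).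
  { rewrite pow_mult. rewrite <- Rpow_mult_distr.
    assert ((9*9) ^ k <= ((27/2)^2) ^ k) by (apply pow_incr; lra).
    pose proof (pow_le ((27/2)^2) k ltac:(nra)). lra. }
  pose proof (muP_ge0 _ d Hd k p) as Hg.
  pose proof (muP_sym _ d Hd k p) as Hs.
  destruct Hd as [H0 [Hz [Hds Ht]]].
  split.
  - intros x y z. pose proof (Hg x z). pose proof (Hg z y).
    assert (muP d k p x y <= 9 ^ k * (muP d k p x z + muP d k p z y)).
    { destruct (Rle_dec (d x z) (d z y)).
      - pose proof (key _ d (conj H0 (conj Hz (conj Hds Ht))) k p x y z r). nra.
      - pose proof (key2 _ d (conj H0 (conj Hz (conj Hds Ht))) k p x y z ltac:(lra)). nra. }
    pose proof (Hg x z). pose proof (Hg z y). nra.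
  - intros x y z w.
    set (D := conj H0 (conj Hz (conj Hds Ht)) : is_metric d).
    pose proof (Rmax_l (muP d k p x z * muP d k p y w) (muP d k p x w * muP d k p y z)).
    pose proof (Rmax_r (muP d k p x z * muP d k p y w) (muP d k p x w * muP d k p y z)).
    set (M := Rmax _ _) in *.
    assert (HM0 : 0 <= M). { pose proof (Hg x z). pose proof (Hg y w). nra. }

    assert (C : forall A B P Q, 0 <= A -> 0 <= B -> A <= 9^k * P -> B <= 9^k * Q ->
               P * Q <= M -> A * B <= 9^k * 9^k * M).
    { intros. apply Rle_trans with ((9^k*P)*(9^k*Q)).
      apply Rmult_le_compat; auto.
      replace (9^k*P*(9^k*Q)) with (9^k*9^k*(P*Q)) by ring.
      apply Rmult_le_compat_l; nra. }
    pose proof (Hg x y). pose proof (Hg z w).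
    pose proof (Hds x z). pose proof (Hds y w). pose proof (Hds x w). pose proof (Hds y z). pose proof (Hds x y). pose proof (Hds z w).
    assert (HA : d x z <= d z y -> d x z <= d x w -> muP d k p x y * muP d k p z w <= 9 ^ k * 9 ^ k * M).
    { intros. apply (C _ _ (muP d k p y z) (muP d k p x w)); auto.
      rewrite (Hs y z). apply (key _ d D); lra.
      apply (key _ d D). lra. rewrite Rmult_comm; auto. }
    assert (HB : d y w <= d x w -> d y w <= d z y -> muP d k p x y * muP d k p z w <= 9 ^ k * 9 ^ k * M).
    { intros. apply (C _ _ (muP d k p x w) (muP d k p y z)); auto.
      apply (key2 _ d D). lra.
      rewrite (Hs y z). apply (key2 _ d D). lra. }
    assert (HC' : d x w <= d w y -> d x w <= d z x -> muP d k p x y * muP d k p z w <= 9 ^ k * 9 ^ k * M).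
    { intros. apply (C _ _ (muP d k p y w) (muP d k p x z)); auto.
      rewrite (Hs y w). apply (key _ d D); lra.
      rewrite (Hs x z). apply (key2 _ d D). lra. rewrite Rmult_comm; auto. }
    assert (HD' : d z y <= d x z -> d z y <= d y w -> muP d k p x y * muP d k p z w <= 9 ^ k * 9 ^ k * M).
    { intros. apply (C _ _ (muP d k p x z) (muP d k p y w)); auto.
      apply (key2 _ d D); lra.
      apply (key _ d D); lra. }
    assert (muP d k p x y * muP d k p z w <= 9 ^ k * 9 ^ k * M).
    { pose proof (Hds x z). pose proof (Hds y w). pose proof (Hds x w). pose proof (Hds y z).
      destruct (Rle_dec (d x z) (d y w)); destruct (Rle_dec (d x z) (d x w));
      destruct (Rle_dec (d x z) (d y z)); destruct (Rle_dec (d y w) (d x w));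
      destruct (Rle_dec (d y w) (d y z)); destruct (Rle_dec (d x w) (d y z));
      first [apply HA; lra | apply HB; lra | apply HC'; lra | apply HD'; lra]. }
    nra.
Qed.
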